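(* Consider Algorithm 1 applied to $\min\varphi(w)$ s.t. $w\in D$, assume the inner loop always terminates, and let $\{w^j\}$ be the resulting infinite sequence of outer iterates. Assume that $\varphi$ is bounded from below and uniformly continuous on $\mathcal S_\varphi(w^0):=\{w\in D:\varphi(w)\le\varphi(w^0)\}$. Let $\bar w$ be an accumulation point of $\{w^j\}$, with $w^j\to\bar w$ along a subsequence $K$. Then $\bar w$ is an M-stationary point of the problem, i.e., $0\in\nabla\varphi(\bar w)+\mathcal N^{\lim}_D(\bar w)$, and $\gamma_j(w^{j+1}-w^j)\to0$ as $j\to\infty$, $j\in K$.
   Context: $\mathbb W$ is a Euclidean space, $\varphi\colon\mathbb W\to\mathbb R$ continuously differentiable, $D\subset\mathbb W$ nonempty and closed (neither need be convex). The limiting normal cone at $\bar w\in D$ is $\mathcal N^{\lim}_D(\bar w):=\limsup_{w\to\bar w}\operatorname{cone}(w-\Pi_D(w))$ (outer set limit, $\Pi_D$ the multivalued Euclidean projection onto $D$). Algorithm 1 (general spectral gradient method, without termination test): parameters $\tau>1$, $\sigma\in(0,1)$, $0<\gamma_{\min}\le\gamma_{\max}<\infty$, $m\in\mathbb N$, starting point $w^0\in D$. For $j=0,1,2,\dots$: set $m_j:=\min(j,m)$ and choose $\gamma_j^0\in[\gamma_{\min},\gamma_{\max}]$; for $i=1,2,\dots$ set $\gamma_{j,i}:=\tau^{i-1}\gamma_j^0$ and compute a (global) solution $w^{j,i}$ of $\min_w \varphi(w^j)+\langle\nabla\varphi(w^j),w-w^j\rangle+\frac{\gamma_{j,i}}2\|w-w^j\|^2$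 s.t. $w\in D$ (subproblem $Q(j,i)$); the inner loop stops at the first $i$ with $\varphi(w^{j,i})\le\max_{r=0,\dots,m_j}\varphi(w^{j-r})+\sigma\langle\nabla\varphi(w^j),w^{j,i}-w^j\rangle$; then set $i_j:=i$, $\gamma_j:=\gamma_{j,i_j}$, $w^{j+1}:=w^{j,i_j}$. *)

(* Defs.v *)
From HB Require Import structures.
From mathcomp Require Import all_boot all_order all_algebra.
From mathcomp Require Import all_classical all_reals all_analysis.
Set Implicit Arguments. Unset Strict Implicit. Unset Printing Implicit Defensive.
Import Order.TTheory GRing.Theory Num.Theory.
Import numFieldNormedType.Exports.
Local Open Scope classical_set_scope.
Local Open Scope ring_scope.

Section Defs.
Variables (R : realType) (n : nat).
Notation W := 'rV[R]_n.

Definition dotp (u v : W) : R := \sum_(i < n) u ord0 i * v ord0 i.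
Definition enorm (u : W) : R := Num.sqrt (dotp u u).

Definition proj_set (D : set W) (w : W) : set W :=
  [set p | D p /\ forall d, D d -> enorm (w - p) <= enorm (w - d)].

Definition cone (S : set W) : set W :=
  [set v | exists t s, 0 <= t /\ S s /\ v = t *: s].

(* limiting normal cone: outer (Painleve-Kuratowski) limit of
   cone(w - Pi_D(w)) as w -> wbar *)
Definition lim_normal_cone (D : set W) (wbar : W) : set W :=
  [set v | exists (wk vk : nat -> W),
     wk @ \oo --> wbar /\ vk @ \oo --> v /\
     forall k, cone [set wk k - p | p in proj_set D (wk k)] (vk k)].

Definition Qobj (phi : W -> R) (g : W -> W) (wj : W) (gam : R) (w : W) : R :=
  phi wj + dotp (g wj) (w - wj) + gam / 2 * enorm (w - wj) ^+ 2.

Definition is_Qsol (D : set W) (phi : W -> R) (g : W -> W) (wj : W) (gam : R)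
  (w : W) : Prop :=
  D w /\ forall v, D v -> Qobj phi g wj gam w <= Qobj phi g wj gam v.

Definition ref_val (phi : W -> R) (w : nat -> W) (m j : nat) : R :=
  \big[Num.max/phi (w j)]_(r < (minn j m).+1) phi (w (j - r)%N).

Definition accept (phi : W -> R) (g : W -> W) (sigma : R) (w : nat -> W)
  (m j : nat) (wji : W) : Prop :=
  phi wji <= ref_val phi w m j + sigma * dotp (g (w j)) (wji - w j).

(* A run of Algorithm 1 whose inner loops all terminate:
   w = outer iterates, gamma0 j = gamma_j^0, winner j i = w^{j,i},
   it j = i_j, gamma j = gamma_j. *)
Definition SG_run (D : set W) (phi : W -> R) (g : W -> W)
  (tau sigma gmin gmax : R) (m : nat) (w0 : W)
  (w : nat -> W) (gamma0 : nat -> R) (winner : nat -> nat -> W)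
  (it : nat -> nat) (gamma : nat -> R) : Prop :=
  w 0%N = w0 /\
  forall j : nat,
    [/\ gmin <= gamma0 j <= gmax,
        (0 < it j)%N,
        (forall i, (0 < i <= it j)%N ->
           is_Qsol D phi g (w j) (tau ^+ i.-1 * gamma0 j) (winner j i)),
        (forall i, (0 < i < it j)%N ->
           ~ accept phi g sigma w m j (winner j i))
      & [/\ accept phi g sigma w m j (winner j (it j)),
            gamma j = tau ^+ (it j).-1 * gamma0 j
          & w j.+1 = winner j (it j)]].

End Defs.

(* Main.v *)
Require Import Defs.
From HB Require Import structures.
From mathcomp Require Import all_boot all_order all_algebra.
From mathcomp Require Import all_classical all_reals all_analysis.
From mathcomp Require Import zify ring lra.
Import Order.TTheory GRing.Theory Num.Theory.
Import numFieldNormedType.Exports.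
Local Open Scope classical_set_scope.
Local Open Scope ring_scope.
Section Basic.
Context {R : realType} {n : nat}.
Implicit Types u v : 'rV[R]_n.
Lemma coord_le v i : `|v ord0 i| <= `|v|.
Proof.
have -> : `|v| = mx_norm v by [].
rewrite mx_normrE. exact: (le_bigmax _ (fun ij : 'I_1 * 'I_n => `|v ij.1 ij.2|) (ord0, i)).
Qed.
Lemma dotpC u v : dotp u v = dotp v u.
Proof. by apply: eq_bigr => i _; rewrite mulrC. Qed.
Lemma dotpDl u v w : dotp (u + v) w = dotp u w + dotp v w.
Proof. by rewrite /dotp -big_split; apply: eq_bigr => i _; rewrite !mxE mulrDl. Qed.
Lemma dotpNl u w : dotp (- u) w = - dotp u w.
Proof. by rewrite /dotp -sumrN; apply: eq_bigr => i _; rewrite !mxE mulNr. Qed.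
Lemma dotpZl a u w : dotp (a *: u) w = a * dotp u w.
Proof. by rewrite /dotp mulr_sumr; apply: eq_bigr => i _; rewrite !mxE mulrA. Qed.
Lemma dotpBl u v w : dotp (u - v) w = dotp u w - dotp v w.
Proof. by rewrite dotpDl dotpNl. Qed.
Lemma dotpDr u v w : dotp w (u + v) = dotp w u + dotp w v.
Proof. by rewrite !(dotpC w) dotpDl. Qed.
Lemma dotpBr u v w : dotp w (u - v) = dotp w u - dotp w v.
Proof. by rewrite !(dotpC w) dotpBl. Qed.
Lemma dotpZr a u w : dotp w (a *: u) = a * dotp w u.
Proof. by rewrite !(dotpC w) dotpZl. Qed.
Lemma dotp_ge0 u : 0 <= dotp u u.
Proof. by apply: sumr_ge0 => i _; rewrite -expr2 sqr_ge0. Qed.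
Lemma enorm2 u : enorm u ^+ 2 = dotp u u.
Proof. by rewrite /enorm sqr_sqrtr // dotp_ge0. Qed.
Lemma dotp_le u v : `|dotp u v| <= n%:R * (`|u| * `|v|).
Proof.
rewrite /dotp (le_trans (ler_norm_sum _ _ _)) //.
rewrite mulr_natl -[n in _ *+ n]card_ord -sumr_const; apply: ler_sum => i _ /=.
by rewrite normrM ler_pM ?coord_le.
Qed.
Lemma norm2_le_dotp u : `|u| ^+ 2 <= dotp u u.
Proof.
have -> : `|u| = mx_norm u by [].
have [/eqP u0|/mx_norm_neq0 [[a i] ->]] := boolP (mx_norm u == 0).
  by rewrite u0 expr0n /= dotp_ge0.
rewrite /= (ord1 a) real_normK ?num_real // /dotp (bigD1 i) //= -expr2 lerDl.
by apply: sumr_ge0 => k _; rewrite -expr2 sqr_ge0.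
Qed.
End Basic.
Section MVT.
Context {R : realType} {n : nat}.
Lemma mvt_line (phi : 'rV[R]_n -> R) (g : 'rV[R]_n -> 'rV[R]_n) (x v : 'rV[R]_n) :
  (forall x, differentiable phi x) ->
  (forall x h, 'd phi x h = dotp (g x) h) ->
  exists2 t, 0 <= t <= 1 & phi (x + v) - phi x = dotp (g (x + t *: v)) v.
Proof.
move=> dphi gphi.
pose f := fun s : R => phi (x + s *: v).
have E s : (fun h : R => h^-1 *: ((f \o shift s) (h *: 1) - f s)) =
    (fun h => h^-1 *: ((phi \o shift (x + s *: v)) (h *: v) - phi (x + s *: v))).
  apply: funext => h /=; rewrite /f /=; congr (_ *: (phi _ - _)).
  have -> : (h%:A : R) = h by rewrite [LHS]mulr1.
  by rewrite /shift /= scalerDl addrCA.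
have der (s : R) : is_derive s (1 : R) f (dotp (g (x + s *: v)) v).
  have dv : derivable phi (x + s *: v) v by apply: diff_derivable.
  have df : derivable f s 1 by rewrite /derivable E.
  apply: DeriveDef => //.
  transitivity (derive phi (x + s *: v) v); first by rewrite /derive E.
  by rewrite deriveE // gphi.
have cf : {within `[0, 1], continuous f}.
  apply: continuous_subspaceT => y.
  apply: differentiable_continuous; apply/derivable1_diffP.
  exact: (@ex_derive _ _ _ _ _ _ _ (der y)).
have [t t01 Ht] := @MVT_segment R f (fun s => dotp (g (x + s *: v)) v) 0 1 ler01
  (fun s _ => der s) cf.
exists t; first by move: t01; rewrite in_itv.
by move: Ht; rewrite /f scale0r addr0 scale1r subr0 mulr1.
Qed.
End MVT.
Section Conv.
Context {R : realType} {n : nat}.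
Lemma seq_cvgP (u : nat -> 'rV[R]_n) (a : 'rV[R]_n) :
  u @ \oo --> a <-> forall e : R, 0 < e -> exists N, forall l, (N <= l)%N -> `|a - u l| < e.
Proof.
split.
  move=> /cvgrPdist_lt H e e0; have [N _ HN] := H e e0.
  by exists N => l Hl; apply: HN.
move=> H; apply/cvgrPdist_lt => e e0; have [N HN] := H e e0.
by exists N.
Qed.
Lemma cont_at (g : 'rV[R]_n -> 'rV[R]_n) x : continuous g ->
  forall e : R, 0 < e -> exists2 d : R, 0 < d & forall y, `|x - y| < d -> `|g x - g y| < e.
Proof.
move=> cg e e0; have := cg x; move=> /cvgrPdist_lt /(_ e e0).
move=> /nbhs_ballP [d d0 Hd]; exists d => // y xy; apply: Hd.
by rewrite -ball_normE /ball_.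
Qed.
End Conv.
Section Proj.
Context {R : realType} {n : nat}.
Implicit Types u v : 'rV[R]_n.
Lemma ab_lemma (u x p d : 'rV[R]_n) (ga : R) : 0 < ga ->
  dotp u (p - x) + ga / 2 * dotp (p - x) (p - x) <= dotp u (d - x) + ga / 2 * dotp (d - x) (d - x) ->
  2 * dotp (- (ga^-1 *: u) - (p - x)) (d - p) <= dotp (d - p) (d - p).
Proof.
move=> g0 H.
have -> : d - p = (d - x) - (p - x) by rewrite opprB addrA subrK.
move: H; set P := p - x; set Q := d - x => H; clearbody P Q.
rewrite !(dotpBl, dotpBr, dotpNl, dotpZl) ?(dotpC Q P).
have H' : ga^-1 * (dotp u P + ga / 2 * dotp P P) <= ga^-1 * (dotp u Q + ga / 2 * dotp Q Q).
  by rewrite ler_wpM2l // ltW // invr_gt0.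
have E1 : ga^-1 * (ga / 2 * dotp P P) = dotp P P / 2 by field; rewrite gt_eqF.
have E2 : ga^-1 * (ga / 2 * dotp Q Q) = dotp Q Q / 2 by field; rewrite gt_eqF.
rewrite !mulrDr E1 E2 in H'.
lra.
Qed.

Lemma proj_scale (a b : 'rV[R]_n) (t : R) : 0 < t <= 1 -> 2 * dotp a b <= dotp b b ->
  enorm (t *: a) <= enorm (t *: a - b).
Proof.
move=> /andP[t0 t1] H; rewrite /enorm ler_sqrt ?dotp_ge0 //.
rewrite !(dotpBl, dotpBr, dotpZl, dotpZr) (dotpC b a).
have bb := dotp_ge0 b.
have A : 0 <= (1 - t) * dotp b b by rewrite mulr_ge0 // subr_ge0.
have B : 0 <= t * (dotp b b - 2 * dotp a b) by apply: mulr_ge0; [exact: ltW | rewrite subr_ge0].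
lra.
Qed.
End Proj.

Section Alg.
Variables (R : realType) (n : nat) (phi : 'rV[R]_n -> R) (g : 'rV[R]_n -> 'rV[R]_n)
  (D : set 'rV[R]_n) (tau sigma gmin gmax : R) (m : nat) (w0 : 'rV[R]_n)
  (w : nat -> 'rV[R]_n) (gamma0 : nat -> R)
  (winner : nat -> nat -> 'rV[R]_n) (it : nat -> nat) (gamma : nat -> R).
Hypothesis Htau : 1 < tau.
Hypothesis Hs0 : 0 < sigma.
Hypothesis Hs1 : sigma < 1.
Hypothesis Hgmin : 0 < gmin.
Hypothesis HD0 : D w0.
Hypothesis Hrun : SG_run D phi g tau sigma gmin gmax m w0 w gamma0 winner it gamma.

Local Notation r := (ref_val phi w m).

Lemma gamma0_bnd j : gmin <= gamma0 j <= gmax.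
Proof. by case: (Hrun.2 j). Qed.
Lemma gamma0_pos j : 0 < gamma0 j.
Proof. by have /andP[h _] := gamma0_bnd j; apply: lt_le_trans h. Qed.
Lemma it_pos j : (0 < it j)%N.
Proof. by case: (Hrun.2 j). Qed.
Lemma Qsol_i j i : (0 < i <= it j)%N ->
  is_Qsol D phi g (w j) (tau ^+ i.-1 * gamma0 j) (winner j i).
Proof. by case: (Hrun.2 j) => _ _ H _ _; apply: H. Qed.
Lemma fail_i j i : (0 < i < it j)%N -> ~ accept phi g sigma w m j (winner j i).
Proof. by case: (Hrun.2 j) => _ _ _ H _; apply: H. Qed.
Lemma acc_j j : accept phi g sigma w m j (w j.+1).
Proof. by case: (Hrun.2 j) => _ _ _ _ [H _ ->]. Qed.
Lemma gamma_eq j : gamma j = tau ^+ (it j).-1 * gamma0 j.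
Proof. by case: (Hrun.2 j) => _ _ _ _ [_ -> _]. Qed.
Lemma wnext j : w j.+1 = winner j (it j).
Proof. by case: (Hrun.2 j) => _ _ _ _ [_ _ ->]. Qed.

Lemma gam_ge j k : gamma0 j <= tau ^+ k * gamma0 j.
Proof.
by rewrite ler_peMl ?exprn_ege1 ?ltW // gamma0_pos.
Qed.
Lemma gam_pos j k : 0 < tau ^+ k * gamma0 j.
Proof. exact: lt_le_trans (gamma0_pos j) (gam_ge j k). Qed.
Lemma gamma_ge j : gmin <= gamma j.
Proof.
rewrite gamma_eq; apply: le_trans (gam_ge _ _).
by have /andP[] := gamma0_bnd j.
Qed.
Lemma gamma_pos j : 0 < gamma j.
Proof. exact: lt_le_trans Hgmin (gamma_ge j). Qed.

Lemma Dw j : D (w j).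
Proof.
case: j => [|j]; first by rewrite Hrun.1.
rewrite wnext; have := @Qsol_i j (it j).
by rewrite it_pos leqnn => /(_ isT) [].
Qed.

Lemma enorm0 : enorm (0 : 'rV[R]_n) = 0.
Proof.
rewrite /enorm /dotp big1 ?sqrtr0 // => i _; by rewrite mxE mul0r.
Qed.

Lemma Qobj_self x ga : Qobj phi g x ga x = phi x.
Proof. by rewrite /Qobj subrr enorm0 /dotp big1 ?expr0n /= ?mulr0 ?addr0 // => i _; rewrite mxE mulr0. Qed.

Lemma QobjE x ga y : Qobj phi g x ga y =
  phi x + dotp (g x) (y - x) + ga / 2 * dotp (y - x) (y - x).
Proof. by rewrite /Qobj enorm2. Qed.

Lemma opt j i : (0 < i <= it j)%N ->
  dotp (g (w j)) (winner j i - w j) +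
  tau ^+ i.-1 * gamma0 j / 2 * dotp (winner j i - w j) (winner j i - w j) <= 0.
Proof.
move=> Hi; have [_ H] := @Qsol_i _ _ Hi.
have := H _ (Dw j); rewrite Qobj_self QobjE.
by rewrite -addrA -[X in _ -> _ <= X](subrr (phi (w j))) -lerBrDl => ->.
Qed.

Lemma opt_cmp j i1 i2 : (0 < i1 <= it j)%N -> (0 < i2 <= it j)%N ->
  dotp (g (w j)) (winner j i1 - w j) +
  tau ^+ i1.-1 * gamma0 j / 2 * dotp (winner j i1 - w j) (winner j i1 - w j) <=
  dotp (g (w j)) (winner j i2 - w j) +
  tau ^+ i1.-1 * gamma0 j / 2 * dotp (winner j i2 - w j) (winner j i2 - w j).
Proof.
move=> H1 H2; have [_ H] := @Qsol_i _ _ H1; have [D2 _] := @Qsol_i _ _ H2.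
have := H _ D2; rewrite !QobjE -!addrA lerD2l; done.
Qed.


Lemma opt_next j : dotp (g (w j)) (w j.+1 - w j) + gamma j / 2 * dotp (w j.+1 - w j) (w j.+1 - w j) <= 0.
Proof. by rewrite wnext gamma_eq; apply: opt; rewrite it_pos leqnn. Qed.

Lemma descent j : phi (w j.+1) <= r j - sigma * gamma j / 2 * dotp (w j.+1 - w j) (w j.+1 - w j).
Proof.
have A := acc_j j; rewrite /accept in A.
apply: le_trans A _; rewrite lerD2l.
have O := opt_next j.
have : sigma * dotp (g (w j)) (w j.+1 - w j) <= sigma * (- (gamma j / 2 * dotp (w j.+1 - w j) (w j.+1 - w j))).
  by rewrite ler_pM2l //; lra.
by rewrite mulrN !mulrA.
Qed.

Lemma ref_att j : exists k, (j - minn j m <= k <= j)%N /\ r j = phi (w k).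
Proof.
rewrite /ref_val.
apply: (big_ind (fun y => exists k, (j - minn j m <= k <= j)%N /\ y = phi (w k))).
- by exists j; rewrite leqnn leq_subr.
- move=> y1 y2 [k1 [H1 ->]] [k2 [H2 ->]].
  by case: (leP (phi (w k1)) (phi (w k2))) => _; [exists k2|exists k1].
- move=> i _; exists (j - i)%N; split => //.
  have := ltn_ord i; rewrite ltnS => Hi.
  by rewrite leq_sub2l // leq_subr.
Qed.

Lemma ref_ge j k : (j - minn j m <= k <= j)%N -> phi (w k) <= r j.
Proof.
move=> /andP[H1 H2].
have Hi : (j - k < (minn j m).+1)%N by lia.
have := le_bigmax (phi (w j)) (fun i : 'I_(minn j m).+1 => phi (w (j - i)%N)) (Ordinal Hi).
by rewrite /= subKn.
Qed.

Lemma phi_le_r j : phi (w j) <= r j.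
Proof. by apply: ref_ge; rewrite leqnn leq_subr. Qed.

Lemma next_le_r j : phi (w j.+1) <= r j.
Proof.
apply: le_trans (descent j) _; rewrite lerBlDr lerDl.
by rewrite mulr_ge0 ?dotp_ge0 // mulr_ge0 ?divr_ge0 ?mulr_ge0 ?ltW ?gamma_pos.
Qed.

Lemma r_noninc j : r j.+1 <= r j.
Proof.
have [k [Hk ->]] := ref_att j.+1.
have [->|ne] := eqVneq k j.+1; first exact: next_le_r.
by apply: ref_ge; lia.
Qed.

Lemma r_mono i j : (i <= j)%N -> r j <= r i.
Proof.
elim: j => [|j IH]; first by rewrite leqn0 => /eqP ->.
rewrite leq_eqVlt => /orP [/eqP ->//|]; rewrite ltnS => /IH.
exact: le_trans (r_noninc j).
Qed.

Lemma r0 : r 0 = phi w0.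
Proof. by have [k [Hk ->]] := ref_att 0; move: Hk; rewrite leqn0 => /andP[_ /eqP->]; rewrite Hrun.1. Qed.

Lemma r_le_w0 j : r j <= phi w0.
Proof. by rewrite -r0 r_mono. Qed.

Lemma phi_le_w0 j : phi (w j) <= phi w0.
Proof. exact: le_trans (phi_le_r j) (r_le_w0 j). Qed.

Hypothesis Hlb : exists lb, forall x, D x -> phi x <= phi w0 -> lb <= phi x.
Hypothesis Huc : forall eps, 0 < eps -> exists2 delta, 0 < delta &
     forall x y, D x -> phi x <= phi w0 -> D y -> phi y <= phi w0 ->
       enorm (x - y) < delta -> `|phi x - phi y| < eps.

Definition Lim := inf (range r).

Lemma r_hlb : has_lbound (range r).
Proof.
have [lb Hlb'] := Hlb; exists lb => _ [j _ <-].
apply: le_trans (phi_le_r j); apply: Hlb' (Dw j) (phi_le_w0 j).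
Qed.

Lemma L_le j : Lim <= r j.
Proof. by apply: (ge_inf r_hlb); exists j. Qed.

Lemma L_conv e : 0 < e -> exists N, forall j, (N <= j)%N -> r j < Lim + e.
Proof.
move=> e0; have [_ [N _ <-] HN] := inf_adherent e0 (conj (ex_intro _ (r 0) (ex_intro2 _ _ 0%N I erefl)) r_hlb).
exists N => j Hj; rewrite /Lim; exact: le_lt_trans (r_mono N j Hj) HN.
Qed.

Lemma dotpNN (u : 'rV[R]_n) : dotp (- u) (- u) = dotp u u.
Proof. by rewrite dotpNl (dotpC u) dotpNl opprK. Qed.

Lemma grippo K : forall e, 0 < e -> exists N, forall j p k, (N <= j)%N ->
  (j - minn j m <= p <= j)%N -> r j = phi (w p) -> (k <= K)%N ->
  `|phi (w (p - k)) - Lim| < e.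
Proof.
elim: K => [|K IH] e e0.
  have [N HN] := L_conv _ e0; exists N => j p k Hj _ Hp; rewrite leqn0 => /eqP ->.
  rewrite subn0 -Hp ltr_norml; have := HN _ Hj; have := L_le j; lra.
set c := sigma * gmin / 2.
have c0 : 0 < c by rewrite /c divr_gt0 ?mulr_gt0.
have e20 : 0 < e / 2 by rewrite divr_gt0.
have [de de0 Hde] := Huc _ e20.
set eta := c * de ^+ 2.
have eta0 : 0 < eta by rewrite /eta mulr_gt0 // exprn_gt0.
have eta20 : 0 < eta / 2 by rewrite divr_gt0.
have emin0 : 0 < Num.min (e / 2) (eta / 2) by rewrite lt_min e20 eta20.
have [N0 HN0] := IH _ emin0.
have [N1 HN1] := L_conv _ eta20.
exists (N0 + N1 + m + K + 1)%N => j p k Hj Hp Hrp Hk.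
have [HkK|HkK] := leqP k K.
  have Hj0 : (N0 <= j)%N by clear -Hj; lia.
  have := HN0 j p k Hj0 Hp Hrp HkK; rewrite lt_min => /andP[H _].
  by apply: lt_trans H _; rewrite ltr_pdivrMr // ltr_pMr // ltr1n.
have -> : k = K.+1 by clear -Hk HkK; lia.
set i := (p - K.+1)%N.
have Hpk : (K < p)%N by move: Hp => /andP[Hp _]; clear -Hj Hp; lia.
have Hi1 : (p - K)%N = i.+1 by rewrite /i; clear -Hpk; lia.
have Hj0 : (N0 <= j)%N by clear -Hj; lia.
have H1 := HN0 j p K Hj0 Hp Hrp (leqnn K); rewrite Hi1 lt_min in H1.
move: H1 => /andP[H1a H1b].
have Hi2 : (N1 <= i)%N by move: Hp => /andP[Hp _]; rewrite /i; clear -Hj Hp; lia.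
have H2 := HN1 i Hi2.
have Hd := descent i.
have Hg : c <= sigma * gamma i / 2.
  by rewrite /c ler_pM2r ?invr_gt0 // ler_pM2l // gamma_ge.
have Hdd : dotp (w i.+1 - w i) (w i.+1 - w i) < de ^+ 2.
  rewrite -(ltr_pM2l c0) -/eta.
  have := dotp_ge0 (w i.+1 - w i) => dd0.
  have : c * dotp (w i.+1 - w i) (w i.+1 - w i) <= sigma * gamma i / 2 * dotp (w i.+1 - w i) (w i.+1 - w i) by rewrite ler_wpM2r.
  move: H1b H2 Hd; rewrite ltr_norml; lra.
have Hn : enorm (w i - w i.+1) < de.
  rewrite /enorm -opprB dotpNN -(ger0_norm (ltW de0)) -sqrtr_sqr ltr_sqrt //.
  by rewrite exprn_gt0.
have := Hde _ _ (Dw i) (phi_le_w0 i) (Dw i.+1) (phi_le_w0 i.+1) Hn.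
move: H1a; rewrite !ltr_norml; lra.
Qed.

Lemma phi_conv e : 0 < e -> exists N, forall j, (N <= j)%N -> `|phi (w j) - Lim| < e.
Proof.
move=> e0; have [N HN] := grippo m _ e0; exists N => j Hj.
have [p [Hp Hrp]] := ref_att (j + m).
have Hjm : (N <= j + m)%N by clear -Hj; lia.
have Hk : (p - j <= m)%N by move: Hp => /andP[_ Hp]; clear -Hp; lia.
have := HN (j + m)%N p (p - j)%N Hjm Hp Hrp Hk.
have -> // : (p - (p - j))%N = j.
by move: Hp => /andP[Hp _]; clear -Hp; lia.
Qed.

Lemma gd_conv e : 0 < e -> exists N, forall j, (N <= j)%N ->
  gamma j * dotp (w j.+1 - w j) (w j.+1 - w j) < e.
Proof.
move=> e0; have e40 : 0 < sigma * e / 4 by rewrite divr_gt0 ?mulr_gt0.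
have [N1 HN1] := L_conv _ e40; have [N2 HN2] := phi_conv _ e40.
exists (N1 + N2)%N => j Hj.
have Hj1 : (N1 <= j)%N by clear -Hj; lia.
have Hj2 : (N2 <= j.+1)%N by clear -Hj; lia.
have A := HN1 _ Hj1; have B := HN2 _ Hj2; have C := descent j.
have E : sigma * gamma j / 2 * dotp (w j.+1 - w j) (w j.+1 - w j) =
  (sigma / 2) * (gamma j * dotp (w j.+1 - w j) (w j.+1 - w j)) by ring.
rewrite E in C.
have : sigma / 2 * (gamma j * dotp (w j.+1 - w j) (w j.+1 - w j)) < sigma / 2 * e.
  move: B; rewrite ltr_norml; lra.
by rewrite ltr_pM2l // divr_gt0.
Qed.

Definition Cn : R := n%:R + 1.
Lemma Cn_ge1 : 1 <= Cn.
Proof. by rewrite /Cn lerDr. Qed.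
Lemma Cn_gt0 : 0 < Cn.
Proof. exact: lt_le_trans ltr01 Cn_ge1. Qed.
Lemma dotp_leC (u v : 'rV[R]_n) : dotp u v <= Cn * (`|u| * `|v|).
Proof.
apply: le_trans (ler_norm _) _; apply: le_trans (dotp_le u v) _.
by rewrite ler_wpM2r ?mulr_ge0 // /Cn lerDl.
Qed.
Lemma dotp_geC (u v : 'rV[R]_n) : - (Cn * (`|u| * `|v|)) <= dotp u v.
Proof.
rewrite lerNl; apply: le_trans (ler_norm _) _; rewrite normrN.
apply: le_trans (dotp_le u v) _.
by rewrite ler_wpM2r ?mulr_ge0 // /Cn lerDl.
Qed.

Hypothesis Hdiff : forall x, differentiable phi x.
Hypothesis Hgrad : forall x h, 'd phi x h = dotp (g x) h.

Section Est.
Variable j : nat.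
Hypothesis Hit : (1 < it j)%N.
Let ih := (it j).-1.
Let gh := tau ^+ ih.-1 * gamma0 j.
Let dh := winner j ih - w j.
Let d := w j.+1 - w j.
Lemma ih_range : (0 < ih < it j)%N.
Proof. by rewrite /ih; clear -Hit; lia. Qed.
Lemma gh_pos : 0 < gh.
Proof. exact: gam_pos. Qed.
Lemma gamma_gh : gamma j = tau * gh.
Proof.
rewrite gamma_eq /gh mulrA -exprS; congr (_ ^+ _ * _).
by rewrite /ih; clear -Hit; lia.
Qed.

Lemma est_a : gh * `|dh| <= 2 * Cn * `|g (w j)|.
Proof.
have /andP[H0 H1] := ih_range.
have O := @opt j ih ltac:(by rewrite H0 ltnW).
rewrite -/gh -/dh in O.
have A := dotp_geC (g (w j)) dh.
have B := norm2_le_dotp dh.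
have C : gh / 2 * `|dh| ^+ 2 <= Cn * (`|g (w j)| * `|dh|).
  have : gh / 2 * `|dh| ^+ 2 <= gh / 2 * dotp dh dh by rewrite ler_wpM2l // divr_ge0 // ltW // gh_pos.
  lra.
have [z|nz] := eqVneq `|dh| 0.
  by rewrite z mulr0 mulr_ge0 // mulr_ge0 // /Cn addr_ge0.
have p : 0 < `|dh| by rewrite lt_def nz normr_ge0.
rewrite -(ler_pM2r p); move: C; rewrite expr2; nra.
Qed.

Lemma est_b : exists2 t, 0 <= t <= 1 &
  (1 - sigma) * (gh * `|dh|) < 2 * Cn * `|g (w j + t *: dh) - g (w j)|.
Proof.
have /andP[H0 H1] := ih_range.
have F := @fail_i j ih ltac:(by rewrite H0 H1).
have O := @opt j ih ltac:(by rewrite H0 ltnW).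
rewrite -/gh -/dh in O.
have [t t01 Ht] := mvt_line phi g (w j) dh Hdiff Hgrad.
exists t => //.
have E : w j + dh = winner j ih by rewrite /dh addrC subrK.
rewrite E in Ht.
have F' : r j + sigma * dotp (g (w j)) dh < phi (winner j ih).
  by rewrite ltNge; apply/negP => H; apply: F; rewrite /accept -/dh.
have P := phi_le_r j.
set xi := w j + t *: dh in Ht *.
have Bd := dotp_leC (g xi - g (w j)) dh.
rewrite dotpBl in Bd.
have B := norm2_le_dotp dh.
have s1 : 0 <= 1 - sigma by rewrite subr_ge0 ltW.
have K1 : (1 - sigma) * (gh / 2 * dotp dh dh) <= (1 - sigma) * (- dotp (g (w j)) dh).
  by rewrite ler_wpM2l //; lra.
have K2 : (1 - sigma) * (gh / 2 * `|dh| ^+ 2) <= (1 - sigma) * (gh / 2 * dotp dh dh).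
  by rewrite ler_wpM2l // ler_wpM2l // divr_ge0 // ltW // gh_pos.
have C : (1 - sigma) * (gh / 2 * `|dh| ^+ 2) < Cn * (`|g xi - g (w j)| * `|dh|).
  nra.
have [z|nz] := eqVneq `|dh| 0.
  by move: C; rewrite z expr0n /= !mulr0 ltxx.
have p : 0 < `|dh| by rewrite lt_def nz normr_ge0.
rewrite -(ltr_pM2r p); move: C; rewrite expr2; nra.
Qed.
Lemma est_c : (gamma j * `|d|) ^+ 2 <= tau ^+ 2 * Cn * (gh * `|dh|) ^+ 2.
Proof.
have /andP[H0 H1] := ih_range.
have V1 : (0 < it j <= it j)%N by rewrite it_pos leqnn.
have V2 : (0 < ih <= it j)%N by rewrite H0 ltnW.
have A := @opt_cmp j (it j) ih V1 V2.
have B := @opt_cmp j ih (it j) V2 V1.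
rewrite -gamma_eq -wnext -/d -/dh in A; rewrite -wnext -/gh -/d -/dh in B.
have gp := gh_pos.
have gg : 0 < gamma j - gh by rewrite gamma_gh -{2}(mul1r gh) -mulrBl mulr_gt0 // subr_gt0.
have S : (gamma j - gh) * (dotp d d - dotp dh dh) <= 0 by nra.
have Sd : dotp d d <= dotp dh dh.
  by move: S; rewrite pmulr_rle0 // subr_le0.
have Hd := norm2_le_dotp d.
have Hh := dotp_leC dh dh.
have : `|d| ^+ 2 <= Cn * `|dh| ^+ 2 by rewrite expr2; lra.
move=> T; rewrite exprMn gamma_gh.
have -> : tau ^+ 2 * Cn * (gh * `|dh|) ^+ 2 = (tau * gh) ^+ 2 * (Cn * `|dh| ^+ 2) by rewrite !exprMn; ring.
by rewrite ler_wpM2l // exprn_ge0 // mulr_ge0 // ltW // (lt_trans ltr01 Htau).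
Qed.
End Est.

Lemma gmax_pos : 0 < gmax.
Proof. have /andP[a b] := gamma0_bnd 0; exact: lt_le_trans Hgmin (le_trans a b). Qed.

Lemma key (J : nat -> nat) (wbar : 'rV[R]_n) : continuous g -> (forall l, (l <= J l)%N) ->
  (forall e : R, 0 < e -> exists N, forall l, (N <= l)%N -> `|wbar - w (J l)| < e) ->
  forall e : R, 0 < e -> exists N, forall l, (N <= l)%N ->
    gamma (J l) * `|w (J l).+1 - w (J l)| < e.
Proof.
move=> cg HJ HK e e0.
have s1 : 0 < 1 - sigma by rewrite subr_gt0.
have tau0 : 0 < tau by apply: lt_trans ltr01 Htau.
have Cp := Cn_gt0.
set G := `|g wbar| + 1.
have G0 : 0 < G by rewrite /G ltr_pwDr.
set rho := e * (1 - sigma) / (2 * Cn * Cn * tau).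
have rho0 : 0 < rho by rewrite /rho divr_gt0 ?mulr_gt0.
have rho2 : 0 < Num.min 1 (rho / 2) by rewrite lt_min ltr01 divr_gt0.
have [eta eta0 Heta] := cont_at g wbar cg _ rho2.
set M := Num.max gmax (4 * Cn * G * tau / eta).
have M0 : 0 < M by rewrite /M lt_max gmax_pos.
have eM : 0 < e ^+ 2 / M by rewrite divr_gt0 // exprn_gt0.
have [N2 HN2] := gd_conv _ eM.
have eta20 : 0 < eta / 2 by rewrite divr_gt0.
have [N1 HN1] := HK _ eta20.
exists (N1 + N2)%N => l Hl.
have Hl1 : (N1 <= l)%N by clear -Hl; lia.
have Hj2 : (N2 <= J l)%N by apply: leq_trans (HJ l); clear -Hl; lia.
have W := HN1 l Hl1.
move: Hj2 W; set j := J l => Hj2 W.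
set d := w j.+1 - w j.
have gp := gamma_pos j.
have ge0 : 0 <= gamma j * `|d| by rewrite mulr_ge0 // ltW.
suff : (gamma j * `|d|) ^+ 2 < e ^+ 2.
  by rewrite ltr_pXn2r // nnegrE // ltW.
case: (leP (gamma j) M) => HM.
  have Hg := HN2 j Hj2; rewrite -/d in Hg.
  have Hd := norm2_le_dotp d.
  have E1 : (gamma j * `|d|) ^+ 2 <= M * (gamma j * dotp d d).
    rewrite exprMn expr2 -mulrA.
    have L1 : gamma j * `|d| ^+ 2 <= gamma j * dotp d d by rewrite ler_wpM2l // ltW.
    have gd0 : 0 <= gamma j * `|d| ^+ 2 by rewrite mulr_ge0 ?exprn_ge0 // ltW.
    exact: (ler_pM (ltW gp) gd0 HM L1).
  apply: le_lt_trans E1 _.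
  have -> : e ^+ 2 = M * (e ^+ 2 / M) by rewrite mulrC divfK // gt_eqF.
  by rewrite ltr_pM2l.
have Hit : (1 < it j)%N.
  have := it_pos j; case E: (it j) => [|[|k]] // _.
  move: HM; rewrite gamma_eq E expr0 mul1r => HM.
  have /andP[_ b] := gamma0_bnd j.
  have : gmax <= M by rewrite /M le_max lexx.
  lra.
have Ga := est_a j Hit; have [t t01 Gb] := est_b j Hit; have Gc := est_c j Hit.
have Ggh := gamma_gh j Hit.
have ghp := gh_pos j.
move: Ga Gb Gc Ggh ghp; rewrite -/d.
set gh := tau ^+ (it j).-1.-1 * gamma0 j.
set dh := winner j (it j).-1 - w j => Ga Gb Gc Ggh ghp.
have Wj : `|wbar - w j| < eta by apply: lt_trans W _; rewrite ltr_pdivrMr // ltr_pMr // ltr1n.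
have Hg1 := Heta _ Wj.
have Gw : `|g (w j)| <= G.
  have := ler_distD (g wbar) 0 (g (w j)); rewrite !sub0r !normrN.
  move: Hg1; rewrite lt_min => /andP[Hg1 _]; rewrite /G; lra.
have X0 : 0 < 4 * Cn * G / eta by rewrite divr_gt0 // !mulr_gt0.
have XM : 4 * Cn * G / eta < gh.
  rewrite -(ltr_pM2l tau0) -Ggh; apply: le_lt_trans HM.
  have -> : tau * (4 * Cn * G / eta) = 4 * Cn * G * tau / eta by rewrite mulrCA !mulrA [_ * tau]mulrC.
  by rewrite /M le_max lexx orbT.
have Hdh : `|dh| <= eta / 2.
  rewrite -(ler_pM2l X0).
  have -> : 4 * Cn * G / eta * (eta / 2) = 2 * Cn * G.
    by field; rewrite gt_eqF.
  apply: le_trans (_ : gh * `|dh| <= _).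
    by rewrite ler_wpM2r // ltW.
  by apply: le_trans Ga _; rewrite ler_wpM2l // mulr_ge0 // ltW.
have Hxi : `|wbar - (w j + t *: dh)| < eta.
  have := ler_distD (w j) wbar (w j + t *: dh).
  have -> : w j - (w j + t *: dh) = - (t *: dh) by rewrite opprD addrA subrr sub0r.
  rewrite normrN normrZ.
  have /andP[t0 t1] := t01.
  have : `|t| * `|dh| <= `|dh| by rewrite ger0_norm // ler_piMl.
  lra.
have Hg2 := Heta _ Hxi.
have Hdg : `|g (w j + t *: dh) - g (w j)| < rho.
  have := ler_distD (g wbar) (g (w j + t *: dh)) (g (w j)).
  rewrite [`|g (w j + _) - g wbar|]distrC; move: Hg1 Hg2; rewrite !lt_min => /andP[_ A1] /andP[_ A2].
  lra.
have Y : gh * `|dh| < e / (Cn * tau).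
  rewrite -(ltr_pM2l s1); apply: lt_le_trans Gb _.
  have -> : (1 - sigma) * (e / (Cn * tau)) = 2 * Cn * rho.
    by rewrite /rho; field; rewrite !gt_eqF.
  have := ltW Hdg; have : 0 <= 2 * Cn by rewrite mulr_ge0 // ltW.
  nra.
have Y2 : (gh * `|dh|) ^+ 2 < (e / (Cn * tau)) ^+ 2.
  have a0 : 0 <= gh * `|dh| by rewrite mulr_ge0 // ltW.
  have b0 : 0 <= e / (Cn * tau) by rewrite ltW // divr_gt0 // mulr_gt0.
  by rewrite ltr_pXn2r.
apply: le_lt_trans Gc _.
apply: lt_le_trans (_ : tau ^+ 2 * Cn * (e / (Cn * tau)) ^+ 2 <= e ^+ 2).
  by rewrite ltr_pM2l // mulr_gt0 // exprn_gt0.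
have -> : tau ^+ 2 * Cn * (e / (Cn * tau)) ^+ 2 = e ^+ 2 / Cn by field; rewrite !gt_eqF.
rewrite ler_pdivrMr //; have := Cn_ge1; have := exprn_ge0 2 (ltW e0); nra.
Qed.


Lemma vec_eq2 (x y z : 'rV[R]_n) : x - (y + z) = - ((y - x) + z).
Proof. by rewrite !opprD opprK addrA [- y + x]addrC. Qed.

Lemma vec_eq3 (A C X : 'rV[R]_n) (s : R) :
  - A - (s *: X - C) = s *: (- X) - (A - C).
Proof. by rewrite scalerN !opprB [RHS]addrC addrA [- A + C]addrC. Qed.
Lemma vec_eq4 (G P : 'rV[R]_n) (s : R) :
  - G - s *: P = s *: (- P) - G.
Proof. by rewrite scalerN addrC. Qed.

Lemma vec_eq1 (x y z : 'rV[R]_n) : x + y - z = y - (z - x).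
Proof. by rewrite opprB addrA [y + x]addrC. Qed.

Lemma main_sec (K : nat -> nat) (wbar : 'rV[R]_n) :
  continuous g ->
  (forall l, (K l < K l.+1)%N) ->
  (fun l => w (K l)) @ \oo --> wbar ->
  lim_normal_cone D wbar (- g wbar) /\
  (fun l => gamma (K l) *: (w (K l).+1 - w (K l))) @ \oo --> (0 : 'rV[R]_n).
Proof using All.
move=> cg HKinc HK.
have HJ : forall l, (l <= K l)%N.
  by elim=> // l IH; apply: leq_ltn_trans IH (HKinc l).
have HK' := (seq_cvgP _ _).1 HK.
have Key := @key K wbar cg HJ HK'.
have gp := gamma_pos.
have Pn : forall e : R, 0 < e -> exists N, forall l, (N <= l)%N -> `|w (K l).+1 - w (K l)| < e.
  move=> e e0; have [N HN] := Key (gmin * e) (mulr_gt0 Hgmin e0).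
  exists N => l Hl; have H := HN l Hl.
  rewrite -(ltr_pM2l Hgmin); apply: le_lt_trans H.
  by rewrite ler_wpM2r // gamma_ge.
split; last first.
  apply/cvgr0Pnorm_lt => e e0; have [N HN] := Key e e0.
  exists N => // l Hl /=; rewrite normrZ gtr0_norm //; exact: HN.
pose gam l := gamma (K l).
pose P l := w (K l).+1 - w (K l).
pose a l := - ((gam l)^-1 *: g (w (K l))) - P l.
pose t l : R := ((l.+1)%:R * (`|a l| + 1))^-1.
pose wk l := w (K l).+1 + t l *: a l.
pose vk l := gam l *: (w (K l) - w (K l).+1) - g (w (K l)).
have t0 l : 0 < t l by rewrite /t invr_gt0 mulr_gt0 // ltr_pwDr.
have t1 l : t l <= 1.
  rewrite /t invf_le1 ?mulr_gt0 ?ltr_pwDr //.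
  have h1 : 1 <= (l.+1)%:R :> R by rewrite ler1n.
  have h2 : 1 <= `|a l| + 1 by rewrite lerDr.
  apply: le_trans (_ : 1 * 1 <= _); first by rewrite mulr1.
  by apply: ler_pM.
have ta l : `|t l *: a l| <= (l.+1)%:R^-1.
  rewrite normrZ gtr0_norm // /t invfM -mulrA.
  apply: ler_piMr; first by rewrite invr_ge0.
  by rewrite mulrC ler_pdivrMr ?ltr_pwDr // mul1r lerDl.
exists wk, vk; split; [|split].
- apply/seq_cvgP => e e0.
  have e30 : 0 < e / 3 by rewrite divr_gt0.
  have [N1 HN1] := HK' _ e30; have [N2 HN2] := Pn _ e30.
  have := @cvg_harmonic R; move=> /cvgrPdist_lt /(_ _ e30) [N3 _ HN3].
  exists (N1 + N2 + N3)%N => l Hl.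
  have A1 := HN1 l ltac:(clear -Hl; lia).
  have A2 := HN2 l ltac:(clear -Hl; lia).
  have Hl3 : (N3 <= l)%N by clear -Hl; lia.
  have A3 := HN3 l Hl3.
  rewrite /= sub0r normrN ger0_norm ?invr_ge0 // in A3.
  have := ler_distD (w (K l)) wbar (wk l).
  have -> : w (K l) - wk l = - (P l + t l *: a l) by rewrite /wk /P vec_eq2.
  have A4 : `|t l *: a l| < e / 3 := le_lt_trans (ta l) A3.
  rewrite normrN; have := ler_normD (P l) (t l *: a l).
  rewrite -[w (K l).+1 - w (K l)]/(P l) in A2; lra.
- apply/seq_cvgP => e e0.
  have e20 : 0 < e / 2 by rewrite divr_gt0.
  have [d d0 Hd] := cont_at g wbar cg _ e20.
  have [N1 HN1] := HK' _ d0; have [N2 HN2] := Key _ e20.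
  exists (N1 + N2)%N => l Hl.
  have A1 := Hd _ (HN1 l ltac:(clear -Hl; lia)).
  have A2 := HN2 l ltac:(clear -Hl; lia).
  have -> : - g wbar - vk l = gam l *: P l - (g wbar - g (w (K l))).
    by rewrite /vk vec_eq3 opprB.
  apply: le_lt_trans (ler_normB _ _) _.
  rewrite normrZ gtr0_norm ?gp //; rewrite /gam /P; lra.
- move=> l.
  exists (gam l / t l), (t l *: a l); split.
    by rewrite ltW // divr_gt0 ?gp.
  split; last first.
    rewrite scalerA divfK ?gt_eqF // /a scalerBr scalerN scalerA mulfV ?gt_eqF ?gp //.
    by rewrite scale1r vec_eq4 opprB.
  exists (w (K l).+1); last by rewrite /wk addrC addKr.
  split; first exact: Dw.
  move=> d Dd.
  rewrite /wk !vec_eq1 subrr subr0.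
  apply: proj_scale; first by rewrite t0 t1.
  rewrite /a /P.
  apply: ab_lemma; first exact: gp.
  have [_ Hq] := @Qsol_i (K l) (it (K l)) ltac:(by rewrite it_pos // leqnn).
  have := Hq d Dd; rewrite -gamma_eq -wnext !QobjE -!addrA lerD2l.
  by [].
Qed.

End Alg.

Theorem mainTheorem5 (R : realType) (n : nat)
  (phi : 'rV[R]_n -> R) (g : 'rV[R]_n -> 'rV[R]_n) (D : set 'rV[R]_n)
  (tau sigma gmin gmax : R) (m : nat) (w0 : 'rV[R]_n)
  (w : nat -> 'rV[R]_n) (gamma0 : nat -> R)
  (winner : nat -> nat -> 'rV[R]_n) (it : nat -> nat) (gamma : nat -> R)
  (K : nat -> nat) (wbar : 'rV[R]_n) :
  (* phi continuously differentiable with gradient g *)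
  (forall x, differentiable phi x) ->
  (forall x h, 'd phi x h = dotp (g x) h) ->
  continuous g ->
  (* D nonempty and closed *)
  D !=set0 -> closed D ->
  (* parameters *)
  1 < tau -> 0 < sigma < 1 -> 0 < gmin -> gmin <= gmax ->
  D w0 ->
  (* {w^j} is produced by Algorithm 1, all inner loops terminating *)
  SG_run D phi g tau sigma gmin gmax m w0 w gamma0 winner it gamma ->
  (* phi bounded below and uniformly continuous on S_phi(w0) *)
  (exists lb, forall x, D x -> phi x <= phi w0 -> lb <= phi x) ->
  (forall eps, 0 < eps -> exists2 delta, 0 < delta &
     forall x y, D x -> phi x <= phi w0 -> D y -> phi y <= phi w0 ->
       enorm (x - y) < delta -> `|phi x - phi y| < eps) ->
  (* wbar accumulation point along the subsequence K *)
  (forall l, (K l < K l.+1)%N) ->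
  (fun l => w (K l)) @ \oo --> wbar ->
  lim_normal_cone D wbar (- g wbar) /\
  (fun l => gamma (K l) *: (w (K l).+1 - w (K l))) @ \oo --> (0 : 'rV[R]_n).
Proof.
move=> Hdiff Hgrad cg _ _ Htau /andP[Hs0 Hs1] Hgmin _ HD0 Hrun Hlb Huc HKinc HK.
exact: (@main_sec R n phi g D tau sigma gmin gmax m w0 w gamma0 winner it gamma
  Htau Hs0 Hs1 Hgmin HD0 Hrun Hlb Huc Hdiff Hgrad K wbar cg HKinc HK).
Qed.
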